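(* Let $r,i\in\mathbb{Z}$ and $\beta\in\Bbbk^*$. Then for all $0\le l\le k$, $$c_\beta^{r,i}(k,l)=\lambda_\beta^i(k,l)\,y^{k-l}x^rg^{i-k}.$$
   Context: $\Bbbk$ is an algebraically closed field of characteristic $0$; $n,w$ positive integers, $\gamma$ a primitive $n$-th root of unity. $H=B(n,w,\gamma)$ is the Hopf algebra generated by $x^{\pm1},g,y$ with relations $xx^{-1}=x^{-1}x=1$, $xg=gx$, $xy=yx$, $yg=\gamma gy$, $y^n=1-x^w=1-g^n$, with $\Delta(x)=x\otimes x$, $\Delta(g)=g\otimes g$, $\Delta(y)=y\otimes g+1\otimes y$, $\varepsilon(x)=\varepsilon(g)=1$, $\varepsilon(y)=0$, $S(x)=x^{-1}$, $S(g)=g^{-1}$, $S(y)=-yg^{-1}$. The elements $c_\beta^{r,i}(k,l)\in H$ ($0\le l\le k$) are defined by $c_\beta^{r,i}(0,0)=x^rg^i$ and, for $k\ge0$: $c_\beta^{r,i}(k+1,0)=c_\beta^{r,i}(k,0)S(y)+\beta yc_\beta^{r,i}(k,0)S(g)$; for $0<l<k+1$, $c_\beta^{r,i}(k+1,l)=c_\beta^{r,i}(k,l)S(y)+\beta\gamma^{-l}yc_\beta^{r,i}(k,l)S(g)+c_\beta^{r,i}(k,l-1)S(g)$; $c_\beta^{r,i}(k+1,k+1)=c_\beta^{r,i}(k,k)S(g)$. The scalars: $R_\beta^i(k,l)=\beta\gamma^{-l}-\gamma^{k-1-i}$ for $0\le l<k$ and $R_\beta^i(k,k)=1$; $\lambda_\beta^i(0,0)=1$,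 and for $k\ge1$: $\lambda_\beta^i(k,0)=R_\beta^i(k,0)\lambda_\beta^i(k-1,0)$, $\lambda_\beta^i(k,l)=R_\beta^i(k,l)\lambda_\beta^i(k-1,l)+\lambda_\beta^i(k-1,l-1)$ for $0<l<k$, $\lambda_\beta^i(k,k)=1$. *)

(* Defs.v *)
From HB Require Import structures.
From mathcomp Require Import all_boot all_order all_algebra all_field.
Set Implicit Arguments. Unset Strict Implicit. Unset Printing Implicit Defensive.
Import Order.TTheory GRing.Theory Num.Theory.
Local Open Scope ring_scope.

(* Relations of B(n,w,gamma), stated for elements x, g, y of a K-algebra A. *)
Definition Bnwg_relations (K : fieldType) (A : unitAlgType K)
  (n w : nat) (gamma : K) (x g y : A) : Prop :=
  x \is a GRing.unit /\ g \is a GRing.unit /\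
  x * g = g * x /\ x * y = y * x /\
  y * g = gamma *: (g * y) /\
  y ^+ n = 1 - x ^+ w /\ 1 - x ^+ w = 1 - g ^+ n.

(* Antipode values: S(y) = - y g^{-1}, S(g) = g^{-1}. *)
Definition Sy (K : fieldType) (A : unitAlgType K) (g y : A) : A := - (y * g^-1).
Definition Sg (K : fieldType) (A : unitAlgType K) (g : A) : A := g^-1.

(* c_beta^{r,i}(k,l); values for l > k are irrelevant. *)
Fixpoint cbeta (K : fieldType) (A : unitAlgType K) (gamma beta : K)
  (x g y : A) (r i : int) (k : nat) (l : nat) {struct k} : A :=
  match k with
  | 0 => x ^ r * g ^ i
  | k'.+1 =>
      if l == 0%N then
        cbeta gamma beta x g y r i k' 0 * Sy g y
        + beta *: (y * cbeta gamma beta x g y r i k' 0 * Sg g)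
      else if l == k'.+1 then cbeta gamma beta x g y r i k' k' * Sg g
      else cbeta gamma beta x g y r i k' l * Sy g y
           + (beta * gamma ^- l) *: (y * cbeta gamma beta x g y r i k' l * Sg g)
           + cbeta gamma beta x g y r i k' l.-1 * Sg g
  end.

Definition Rbeta (K : fieldType) (gamma beta : K) (i : int) (k l : nat) : K :=
  if (l < k)%N then beta * gamma ^- l - gamma ^ (k%:Z - 1 - i) else 1.

(* lambda_beta^i(k,l); values for l > k are irrelevant. *)
Fixpoint lambda (K : fieldType) (gamma beta : K) (i : int) (k l : nat)
  {struct k} : K :=
  match k with
  | 0 => 1
  | k'.+1 =>
      if l == 0%N then Rbeta gamma beta i k 0 * lambda gamma beta i k' 0
      else if l == k'.+1 then 1
      else Rbeta gamma beta i k l * lambda gamma beta i k' l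
           + lambda gamma beta i k' l.-1
  end.

(* Main.v *)
Require Import Defs.
From HB Require Import structures.
From mathcomp Require Import all_boot all_order all_algebra all_field.
From mathcomp Require Import ring.
Import Order.TTheory GRing.Theory Num.Theory.
Local Open Scope ring_scope.

Section Helpers.
Variables (K : fieldType) (A : unitAlgType K).

Lemma powcomm (a b : A) (c : K) (p : nat) :
  a * b = c *: (b * a) -> a ^+ p * b = c ^+ p *: (b * a ^+ p).
Proof.
move=> h; elim: p => [|p IH]; first by rewrite !expr0 mul1r mulr1 scale1r.
by rewrite exprS -mulrA IH -scalerAr (mulrA a b) h -scalerAl scalerA -exprSr -mulrA -exprS.
Qed.

Lemma gzcomm (g y : A) (gamma : K) (m : int) :
  g \is a GRing.unit -> gamma != 0 -> y * g = gamma *: (g * y) ->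
  g ^ m * y = gamma ^ (- m) *: (y * g ^ m).
Proof.
move=> ug g0 h.
have h1 : g * y = gamma^-1 *: (y * g) by rewrite h scalerA mulVf // scale1r.
have h2 : g^-1 * y = gamma *: (y * g^-1).
  rewrite -[in LHS](mulrK ug y) mulrA h -scalerAr -scalerAl.
  by rewrite mulKr.
case: m => p.
  by rewrite -exprz_inv (powcomm _ _ _ p h1).
rewrite NegzE opprK -exprz_inv.
by rewrite (powcomm _ _ _ p.+1 h2).
Qed.

Lemma zcomm (a b : A) (r : int) : a * b = b * a -> a ^ r * b = b * a ^ r.
Proof.
move=> h; case: r => p /=.
  by apply/esym/commrX.
rewrite NegzE -exprz_inv /=.
apply/esym/commrX/commrV; exact: esym h.
Qed.
End Helpers.

Theorem proposition3p11
  (K : closedFieldType) (hK : [pchar K] =i pred0)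
  (n w : nat) (hn : (0 < n)%N) (hw : (0 < w)%N)
  (gamma : K) (hgamma : n.-primitive_root gamma)
  (A : unitAlgType K) (x g y : A)
  (hrel : Bnwg_relations n w gamma x g y)
  (r i : int) (beta : K) (hbeta : beta != 0)
  (k l : nat) (hlk : (l <= k)%N) :
  cbeta gamma beta x g y r i k l
  = lambda gamma beta i k l *: (y ^+ (k - l) * x ^ r * g ^ (i - k%:Z)).
Proof.
case: hrel => [ux [ug [xg [xy [yg _]]]]].
have g0 : gamma != 0.
  apply/eqP => g0; move: (prim_expr_order hgamma); rewrite g0 expr0n.
  by case: n hn {hgamma} => // ? _ /eqP; rewrite eq_sym oner_eq0.
have cxy : x ^ r * y = y * x ^ r by apply: zcomm.
have eS : forall k : nat, i - k.+1%:Z = i - k%:Z + -1.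
  by move=> k0; rewrite -addn1 PoszD opprD addrA.
have eG : forall k : nat, g ^ (i - k.+1%:Z) = g ^ (i - k%:Z) * g^-1.
  by move=> k0; rewrite -exprN1 -exprzDr // eS.
have L1 : forall k l : nat, (l <= k)%N ->
  (y ^+ (k - l) * x ^ r * g ^ (i - k%:Z)) * Sy g y
  = - gamma ^ (k%:Z - i) *: (y ^+ (k.+1 - l) * x ^ r * g ^ (i - k.+1%:Z)).
  move=> k0 l0 hl; rewrite /Sy mulrN scaleNr; congr (- _).
  rewrite !mulrA -(mulrA _ (g ^ (i - k0%:Z)) y) (gzcomm _ _ _ _ _ _ ug g0 yg).
  rewrite -scalerAr -!scalerAl opprB; congr (_ *: _).
  rewrite !mulrA -(mulrA (y ^+ (k0 - l0)) (x ^ r) y) cxy mulrA -exprSr -subSn //.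
  by rewrite eG !mulrA.
have L2 : forall k l : nat, (l <= k)%N ->
  y * (y ^+ (k - l) * x ^ r * g ^ (i - k%:Z)) * Sg g
  = y ^+ (k.+1 - l) * x ^ r * g ^ (i - k.+1%:Z).
  move=> k0 l0 hl; rewrite /Sg !mulrA -exprS -subSn //.
  by rewrite eG !mulrA.
have L3 : forall k l : nat,
  (y ^+ (k - l) * x ^ r * g ^ (i - k%:Z)) * Sg g
  = y ^+ (k.+1 - l.+1) * x ^ r * g ^ (i - k.+1%:Z).
  move=> k0 l0; rewrite /Sg subSS.
  by rewrite eG !mulrA.
elim: k l hlk => [|k IH] l hl.
  by case: l hl => //= _; rewrite scale1r mul1r subr0.
have eK : k.+1%:Z - 1 - i = k%:Z - i.
  by rewrite -addn1 PoszD addrK.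
case: l hl => [|l] hl.
  rewrite /= IH // -scalerAl L1 // -scalerAr -scalerAl L2 // !scalerA -scalerDl.
  congr (_ *: _).
  rewrite /Rbeta /= expr0 invr1 mulr1 eK.
  ring.
have [->|hlk'] := eqVneq l k.
  have lkk : forall m, lambda gamma beta i m m = 1 by case=> //= m; rewrite eqxx.
  by rewrite /= eqxx IH // lkk -scalerAl L3.
have hl' : (l < k)%N by rewrite ltn_neqAle hlk' -ltnS.
rewrite /= eqSS (negbTE hlk') IH // -scalerAl L1 // -scalerAr -scalerAl L2 //.
rewrite IH ?(ltnW hl') // -scalerAl L3 !scalerA -!scalerDl.
congr (_ *: _).
rewrite /Rbeta ltnS hl' eK.
ring.
Qed.
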